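(* For all names $\vec u,\vec v,\vec w$ (of degrees $\ge1$): $\vec u\dotplus\vec v=\vec u\dotplus\vec w$ if and only if $\vec v=\vec w$, and $\vec v\dotplus\vec u=\vec w\dotplus\vec u$ if and only if $\vec v=\vec w$.
   Context: $\hat N^n$ ($n\ge1$) is the set of names of planar rooted binary trees with $n$ internal vertices: writing a tree as a complete expression (full binary parenthesization, outermost product included) of $x_1\cdots x_{n+1}$, its name $\vec v\in\mathbb N^n$ has $v_i=i$ if at least one left parenthesis stands immediately left of $x_i$, and otherwise $v_i=j$ where the rightmost of the right parentheses immediately following $x_i$ matches a left parenthesis in the run immediately preceding $x_j$. For $\vec v\in\hat N^n,\vec w\in\hat N^m$: $\vec v\nearrow\vec w=(\vec v,n\triangleright w_1,\dots,n\triangleright w_m)$ with $n\triangleright a=a+n$ for $a\neq1$, $n\triangleright1=1$; $\vec v\nwarrow\vec w=(v_1,\dots,v_n,w_1+n,\dots,w_m+n)$. The dendriform addition is the set (grove) $\vec v\dotplus\vec w=\{\vec t\in\hat N^{n+m}:\ \vec v\nearrow\vec w\le\vec t\le\vec v\nwarrow\vec w\}$, with componentwise order. *)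

(* Defs.v *)
From mathcomp Require Import all_boot.
Set Implicit Arguments. Unset Strict Implicit. Unset Printing Implicit Defensive.

Inductive tree := Leaf | Node of tree & tree.

Fixpoint internal (t : tree) : nat :=
  match t with Leaf => 0 | Node l r => (internal l + internal r).+1 end.

Inductive tok := LP | RP | X.
Definition is_LP (a : tok) := if a is LP then true else false.
Definition is_RP (a : tok) := if a is RP then true else false.
Definition is_X  (a : tok) := if a is X then true else false.

(* Complete expression (full parenthesization, outermost product included)
   of x_1 ... x_(n+1) with the shape of t. *)
Fixpoint expr (t : tree) : seq tok :=
  match t with
  | Leaf => [:: X]
  | Node l r => LP :: expr l ++ expr r ++ [:: RP]
  end.

(* 0-based position in s of the variable x_i (i >= 1). *)
Definition xpos (s : seq tok) (i : nat) : nat :=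
  nth 0 [seq p <- iota 0 (size s) | is_X (nth X s p)] i.-1.

Definition cntL (s : seq tok) (p : nat) := count is_LP (take p s).
Definition cntR (s : seq tok) (p : nat) := count is_RP (take p s).

(* position of the left parenthesis matching the right parenthesis at q *)
Definition match_left (s : seq tok) (q : nat) : nat :=
  last 0 [seq q' <- iota 0 q | is_LP (nth X s q') &&
            (cntL s q' + cntR s q + 1 == cntL s q + cntR s q')].

(* the entry v_i of the name, following the paper's definition literally *)
Definition name_entry (s : seq tok) (i : nat) : nat :=
  let p := xpos s i in
  if (0 < p) && is_LP (nth X s p.-1) then i
  else
    (* rightmost right parenthesis in the run immediately following x_i *)
    let q := p + find (fun a => ~~ is_RP a) (drop p.+1 s) in
    (* index j of the variable immediately after the run containing the
       matching left parenthesis *)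
    (count is_X (take (match_left s q) s)).+1.

Definition name (t : tree) : seq nat :=
  [seq name_entry (expr t) i | i <- iota 1 (internal t)].

Definition hatN (n : nat) (v : seq nat) : Prop :=
  exists t : tree, internal t = n /\ name t = v.

Definition tri (n a : nat) : nat := if a == 1 then 1 else a + n.

Definition nearrow (v w : seq nat) : seq nat :=
  v ++ [seq tri (size v) a | a <- w].
Definition nwarrow (v w : seq nat) : seq nat :=
  v ++ [seq a + size v | a <- w].

Definition cwle (a b : seq nat) : bool := all2 leq a b.

Definition dotplus (v w : seq nat) (t : seq nat) : Prop :=
  hatN (size v + size w) t /\ cwle (nearrow v w) t /\ cwle t (nwarrow v w).

Example ex1 : name (Node (Node Leaf Leaf) Leaf) = [:: 1; 1]. Proof. by []. Qed.
Example ex2 : name (Node Leaf (Node Leaf Leaf)) = [:: 1; 2]. Proof. by []. Qed.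
Example ex3 : name (Node (Node Leaf (Node Leaf Leaf)) (Node Leaf Leaf)) = [:: 1; 2; 1; 4].
Proof. by []. Qed.

(* Main.v *)
Require Import Defs.
From mathcomp Require Import all_boot zify.
Set Implicit Arguments. Unset Strict Implicit. Unset Printing Implicit Defensive.

Lemma count_take_cat (P : pred tok) (A B : seq tok) y :
  count P (take y (A ++ B)) = count P (take y A) + count P (take (y - size A) B).
Proof.
rewrite take_cat; case: ltnP => h.
  have e : y - size A = 0 by lia.
  by rewrite e take0 /= addn0.
by rewrite count_cat (take_oversize h).
Qed.

Lemma cnt_shift (P : pred tok) A E B y : y <= size E ->
  count P (take (size A + y) (A ++ E ++ B)) = count P A + count P (take y E).
Proof.
move=> h; rewrite count_take_cat take_oversize ?leq_addr // count_take_cat.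
have e1 : size A + y - size A = y by lia.
have e2 : y - size E = 0 by lia.
by rewrite e1 e2 take0 /= addn0.
Qed.

Lemma nth_shift (x : tok) A E B y : y < size E ->
  nth x (A ++ E ++ B) (size A + y) = nth x E y.
Proof.
move=> h; rewrite nth_cat; have -> : (size A + y < size A) = false by lia.
have e1 : size A + y - size A = y by lia.
by rewrite e1 nth_cat h.
Qed.

Lemma drop_shift (A s : seq tok) n : drop (size A + n) (A ++ s) = drop n s.
Proof. by elim: A => //= a A IH. Qed.

Definition xs (s : seq tok) := [seq p <- iota 0 (size s) | is_X (nth X s p)].

Lemma xposE s i : xpos s i = nth 0 (xs s) i.-1.
Proof. by []. Qed.

Lemma xs_cons c s : xs (c :: s) = (if is_X c then [:: 0] else [::]) ++ map S (xs s).
Proof.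
rewrite /xs /=.
have -> : iota 1 (size s) = map (addn 1) (iota 0 (size s)) by rewrite -iotaDl.
rewrite filter_map; by case: (is_X c).
Qed.

Lemma xs_cat A E : xs (A ++ E) = xs A ++ map (addn (size A)) (xs E).
Proof.
elim: A => [|c A IH] /=.
  by rewrite map_id_in // => x _; rewrite add0n.
rewrite !xs_cons IH map_cat -catA -map_comp; congr (_ ++ (_ ++ _)).
Qed.

Lemma size_xs s : size (xs s) = count is_X s.
Proof. elim: s => [|c s IH] //; rewrite xs_cons size_cat size_map IH /=; by case: c. Qed.

Lemma isX_eq c : is_X c -> c = X. Proof. by case: c. Qed.

Lemma xs_prop s k : k < size (xs s) ->
  [/\ nth 0 (xs s) k < size s, nth X s (nth 0 (xs s) k) = X &
      count is_X (take (nth 0 (xs s) k) s) = k].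
Proof.
elim: s k => [|c s IH] k; first by [].
rewrite xs_cons; case cX: (is_X c) => /=.
  case: k => [|k] /=; first by rewrite (isX_eq cX).
  rewrite ltnS size_map => hk; rewrite (nth_map 0) //.
  by case: (IH k hk) => h1 h2 h3; split => //=; rewrite h3 cX.
rewrite size_map => hk; rewrite (nth_map 0) //.
by case: (IH k hk) => h1 h2 h3; split => //=; rewrite h3 cX.
Qed.

Lemma xpos_shift A E B i : 0 < i <= count is_X E ->
  xpos (A ++ E ++ B) (count is_X A + i) = size A + xpos E i.
Proof.
case/andP=> i0 hi; rewrite !xposE !xs_cat nth_cat size_xs.
have -> : ((count is_X A + i).-1 < count is_X A) = false by lia.
have e : (count is_X A + i).-1 - count is_X A = i.-1 by lia.
rewrite e (nth_map 0); last by rewrite size_cat size_xs; lia.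
by rewrite nth_cat size_xs; have -> : i.-1 < count is_X E by lia.
Qed.


Lemma take_full (P : pred tok) s y : size s <= y -> count P (take y s) = count P s.
Proof. by move=> h; rewrite take_oversize. Qed.

Lemma take_le (P : pred tok) s y : count P (take y s) <= count P s.
Proof. by rewrite -{2}(cat_take_drop y s) count_cat leq_addr. Qed.

Lemma cRP z : count is_RP (take z [:: RP]) = minn z 1.
Proof. by case: z. Qed.
Lemma cLP z : count is_LP (take z [:: RP]) = 0.
Proof. by case: z. Qed.

Lemma count_X_expr t : count is_X (expr t) = (internal t).+1.
Proof. elim: t => //= l IHl r IHr; rewrite !count_cat IHl IHr /=; lia. Qed.

Lemma bal t : count is_LP (expr t) = count is_RP (expr t).
Proof. elim: t => //= l IHl r IHr; rewrite !count_cat IHl IHr /=; lia. Qed.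

Lemma size_expr_gt t : 0 < size (expr t).
Proof. by case: t. Qed.

Lemma wfw t y : count is_RP (take y (expr t)) <= count is_LP (take y (expr t)).
Proof.
elim: t y => [|l IHl r IHr] y; first by case: y.
case: y => [|y] //=.
rewrite !count_take_cat cRP cLP.
have := IHl y; have := IHr (y - size (expr l)).
have := bal l; have := bal r.
have := @take_full is_LP (expr l) y; have := @take_full is_RP (expr l) y.
have := @take_full is_LP (expr r) (y - size (expr l));
have := @take_full is_RP (expr r) (y - size (expr l)).
lia.
Qed.

Lemma wfs t y : 0 < internal t -> 0 < y < size (expr t) ->
  count is_RP (take y (expr t)) < count is_LP (take y (expr t)).
Proof.
case: t => [|l r] //= _; case: y => [|y] //=; rewrite ltnS !size_cat /= => hy.
rewrite !count_take_cat cRP cLP.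
have := wfw l y; have := wfw r (y - size (expr l)).
lia.
Qed.


Lemma cond_shift A E B y q : y <= size E -> q <= size E ->
  (cntL (A ++ E ++ B) (size A + y) + cntR (A++E++B) (size A + q) + 1 =
   cntL (A++E++B) (size A + q) + cntR (A++E++B) (size A + y)) <->
  (cntL E y + cntR E q + 1 = cntL E q + cntR E y).
Proof. by move=> hy hq; rewrite /cntL /cntR !cnt_shift //; split; lia. Qed.

Lemma F3 t q : q < size (expr t) -> nth X (expr t) q = RP ->
  exists y, [/\ y < q, is_LP (nth X (expr t) y) &
    cntL (expr t) y + cntR (expr t) q + 1 = cntL (expr t) q + cntR (expr t) y].
Proof.
elim: t q => [|l IHl r IHr] q; first by case: q => [|[]].
rewrite [expr (Node l r)]/= => hq hRP.
have [q0|qpos] := posnP q; first by rewrite q0 in hRP.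
have hs : size (LP :: expr l ++ expr r ++ [:: RP]) = (size (expr l) + size (expr r)).+2.
  by rewrite /= !size_cat /= addn1 addnS.
case: (leqP q (size (expr l))) => h1.
  have e : LP :: expr l ++ expr r ++ [::RP] = [::LP] ++ expr l ++ (expr r ++ [::RP]) by [].
  have eq : q = size [::LP] + q.-1 by rewrite /=; lia.
  rewrite e eq nth_shift in hRP; last by lia.
  case: (IHl q.-1 _ hRP) => [|y' [hy hLP heq]]; first by lia.
  exists (size [::LP] + y'); rewrite e eq nth_shift; last by lia.
  split => //.
  by apply/cond_shift => //; lia.
case: (ltnP q (size (expr l) + size (expr r)).+1) => h2.
  have e : LP :: expr l ++ expr r ++ [::RP] = (LP :: expr l) ++ expr r ++ [::RP] by [].
  have eq : q = size (LP :: expr l) + (q - (size (expr l)).+1) by rewrite /=; lia.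
  rewrite e eq nth_shift in hRP; last by lia.
  case: (IHr _ _ hRP) => [|y' [hy hLP heq]]; first by lia.
  exists (size (LP :: expr l) + y'); rewrite e eq nth_shift; last by lia.
  split => //.
  rewrite ltn_add2l //.
  by apply/cond_shift => //; lia.
rewrite hs in hq.
have eq : q = (size (expr l) + size (expr r)).+1 by lia.
exists 0; split => //.
rewrite /cntL /cntR take0 /= eq.
have e : LP :: expr l ++ expr r ++ [::RP] = (LP :: expr l ++ expr r) ++ [::RP] by rewrite /= catA.
rewrite e take_cat /= size_cat ltnn subnn take0 cats0 /= !count_cat !bal; lia.
Qed.

Lemma RP_lt E k : is_RP (nth X E k) -> k < size E.
Proof. by case: (ltnP k (size E)) => // hk; rewrite nth_default. Qed.
Lemma LP_lt E k : is_LP (nth X E k) -> k < size E.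
Proof. by case: (ltnP k (size E)) => // hk; rewrite nth_default. Qed.

Lemma nth_catL (x : tok) A B k : k < size A -> nth x (A ++ B) k = nth x A k.
Proof. by move=> h; rewrite nth_cat h. Qed.
Lemma nth_catR (x : tok) A B k : size A <= k -> nth x (A ++ B) k = nth x B (k - size A).
Proof. by move=> h; rewrite nth_cat ltnNge h. Qed.

Lemma nth_cons_pos (x c : tok) s p : 0 < p -> nth x (c :: s) p = nth x s p.-1.
Proof. by case: p. Qed.

Lemma F4 t p : 0 < internal t -> p < size (expr t) -> nth X (expr t) p = X ->
  ((0 < p) && is_LP (nth X (expr t) p.-1)) || is_RP (nth X (expr t) p.+1).
Proof.
elim: t p => [|l IHl r IHr] p //= _.
rewrite !size_cat /=; case: p => [|p] //=; rewrite ltnS => hp hX.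
case: (ltnP p (size (expr l))) => h1.
  rewrite nth_catL // in hX.
  case: l IHl h1 hX {hp} => [|a b] IHl h1 hX.
    by have -> : p = 0 by move: h1 => /=; lia.
  case/orP: (IHl p isT h1 hX).
    case/andP => h0 hL; apply/orP; left.
    by rewrite nth_cons_pos // nth_catL //; apply: LP_lt.
  move=> hR; apply/orP; right.
  by rewrite nth_catL //; apply: RP_lt.
case: (ltnP p (size (expr l) + size (expr r))) => h2; last first.
  have e2 : p = size (expr l) + size (expr r) by lia.
  move: hX; rewrite nth_catR // nth_catR; last by lia.
  by have -> : p - size (expr l) - size (expr r) = 0 by lia.
rewrite nth_catR // nth_catL in hX; last by lia.
case: r IHr h2 hX {hp} => [|a b] IHr h2 hX.
  have -> : p = size (expr l) by move: h2 => /=; lia.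
  by apply/orP; right; rewrite nth_catR ?leqnSn // subSn // subnn.
case/orP: (IHr (p - size (expr l)) isT ltac:(lia) hX).
  case/andP => h0 hL; apply/orP; left.
  rewrite nth_cons_pos; last by lia.
  rewrite nth_catR; last by lia.
  have e : p.-1 - size (expr l) = (p - size (expr l)).-1 by lia.
  by rewrite e nth_catL //; apply: LP_lt.
move=> hR; apply/orP; right.
rewrite nth_catR; last by lia.
have e : p.+1 - size (expr l) = (p - size (expr l)).+1 by lia.
by rewrite e nth_catL //; apply: RP_lt.
Qed.


Definition C (s : seq tok) (q : nat) : pred nat := fun q' =>
  is_LP (nth X s q') && (cntL s q' + cntR s q + 1 == cntL s q + cntR s q').

Arguments C : simpl never.

Lemma mlE s q : match_left s q = last 0 (filter (C s q) (iota 0 q)).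
Proof. by []. Qed.

Lemma ML A B t q : q < size (expr t) -> nth X (expr t) q = RP ->
  match_left (A ++ expr t ++ B) (size A + q) = size A + match_left (expr t) q
  /\ match_left (expr t) q < q.
Proof.
move=> hq hRP; rewrite !mlE.
rewrite iotaD add0n filter_cat.
have -> : iota (size A) q = map (addn (size A)) (iota 0 q) by rewrite -iotaDl addn0.
rewrite filter_map.
have -> : [seq x <- iota 0 q | preim (addn (size A)) (C (A ++ expr t ++ B) (size A + q)) x]
          = [seq x <- iota 0 q | C (expr t) q x].
  apply: eq_in_filter => y; rewrite mem_iota /= => hy.
  rewrite /C nth_shift; last by lia.
  have hc := @cond_shift A (expr t) B y q.
  have hy' : y <= size (expr t) by lia.
  have hq' : q <= size (expr t) by lia.
  case: (hc hy' hq') => h1 h2.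
  by congr (_ && _); apply/eqP/eqP => h; [exact: h1 | exact: h2].
case: (F3 hq hRP) => y0 [hy0 hL heq].
have : y0 \in [seq x <- iota 0 q | C (expr t) q x].
  by rewrite mem_filter mem_iota add0n hy0 andbT /C hL heq eqxx.
case e: [seq x <- iota 0 q | C (expr t) q x] => [//|y ys'] _.
rewrite last_cat /= last_map; split => //.
have := mem_last y ys'; rewrite -e mem_filter mem_iota.
by case/andP => _ /andP [].
Qed.

Lemma G A B t i : 0 < i <= internal t ->
  name_entry (A ++ expr t ++ B) (count is_X A + i) = count is_X A + name_entry (expr t) i.
Proof.
case/andP => i0 hi.
have cX := count_X_expr t.
have hE0 : nth X (expr t) 0 = LP by case: t hi {cX} => //= hi; lia.
rewrite /name_entry xpos_shift; last by apply/andP; lia.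
have hxi : i.-1 < size (xs (expr t)) by rewrite size_xs; lia.
case: (xs_prop hxi); rewrite -xposE => hpE hpX hpc.
set pE := xpos (expr t) i in hpE hpX hpc *.
have pE0 : 0 < pE.
  by rewrite lt0n; apply/eqP => e; rewrite e hE0 in hpX.
have e1 : (size A + pE).-1 = size A + pE.-1 by lia.
rewrite e1 nth_shift; last by lia.
rewrite (_ : 0 < size A + pE = true); last by lia.
rewrite pE0 /=.
case: ifP => hLP; first by [].
have hR : is_RP (nth X (expr t) pE.+1).
  by have := F4 (ltac:(lia) : 0 < internal t) hpE hpX; rewrite pE0 hLP.
have hR' : pE.+1 < size (expr t) by apply: RP_lt.
rewrite -addnS (drop_shift A) drop_cat hR' find_cat.
have hh : has (fun a => ~~ is_RP a) (drop pE.+1 (expr t)).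
  have : 0 < count is_X (drop pE.+1 (expr t)).
    have := count_cat is_X (take pE.+1 (expr t)) (drop pE.+1 (expr t)).
    rewrite cat_take_drop (take_nth X hpE) -cats1 count_cat hpc hpX /= cX; lia.
  rewrite -has_count; apply: sub_has => x; by case: x.
rewrite hh.
set f := find _ (drop pE.+1 (expr t)).
have hf : f < size (drop pE.+1 (expr t)) by rewrite -has_find.
have f0 : 0 < f.
  rewrite lt0n; apply/eqP => e; have := nth_find X hh.
  by rewrite -/f e nth_drop addn0 hR.
have hq : pE + f < size (expr t) by rewrite size_drop in hf; lia.
have hqR : nth X (expr t) (pE + f) = RP.
  have := @before_find _ X (fun a => ~~ is_RP a) (drop pE.+1 (expr t)) f.-1.
  rewrite -/f nth_drop (_ : pE.+1 + f.-1 = pE + f); last by lia.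
  by case: (nth X (expr t) (pE + f)) => //= /(_ ltac:(lia)).
rewrite -addnA; case: (ML A B hq hqR) => -> hm.
by rewrite cnt_shift ?addnS //; lia.
Qed.


Lemma last_expr c t : ~~ is_LP (last c (expr t)).
Proof. by case: t => //= l r; rewrite !last_cat. Qed.

Lemma nseq_rcons k : nseq k RP ++ [:: RP] = RP :: nseq k RP.
Proof. by elim: k => //= k ->. Qed.

Lemma lastX t : exists E' k, [/\ expr t = E' ++ X :: nseq k RP, count is_X E' = internal t,
  (internal t = 0 -> E' = [::]) & (0 < internal t -> ~~ is_LP (last LP E') /\ 0 < k)].
Proof.
elim: t => [|l _ r [E' [k [e c h0 h1]]]]; first by exists [::], 0.
exists (LP :: expr l ++ E'), k.+1; split => //=.
- by rewrite e /= -!catA /= nseq_rcons.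
- by rewrite count_cat c count_X_expr; lia.
- move=> _; split => //; rewrite last_cat.
  case: (posnP (internal r)) => hr; first by rewrite (h0 hr) /=; apply: last_expr.
  case: (h1 hr) => hl _; move: hl; case: E' {e c h0 h1} => //.
Qed.

Lemma xs_nseq k : xs (nseq k RP) = [::].
Proof. by elim: k => //= k IH; rewrite xs_cons IH. Qed.

Lemma nth_last_cons (c : tok) E' rest : nth X (c :: E' ++ rest) (size E') = last c E'.
Proof. by elim: E' c => //= a E' IH c; rewrite IH. Qed.

Lemma Bgen El Er E' k : El = E' ++ X :: nseq k RP -> 0 < k -> ~~ is_LP (last LP E') ->
  nth X El 0 = LP -> ~~ is_RP (nth X Er 0) -> 0 < size Er ->
  (forall y, 0 < y < size El -> count is_RP (take y El) < count is_LP (take y El)) ->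
  count is_LP El = count is_RP El ->
  name_entry (LP :: El ++ Er ++ [::RP]) (count is_X E').+1 = 1.
Proof.
move=> eEl k0 hlast hE0 hEr0 hEr wfsEl balEl.
have cXEl : count is_X El = (count is_X E').+1.
  by rewrite eEl count_cat /= count_nseq /= mul0n addn0 addn1.
have hp : xpos (LP :: El ++ Er ++ [::RP]) (count is_X E').+1 = (size E').+1.
  have := @xpos_shift [::LP] El (Er ++ [::RP]) (count is_X E').+1.
  rewrite /= add0n => ->; last by rewrite cXEl; lia.
  by rewrite xposE eEl xs_cat xs_cons xs_nseq /= nth_cat size_xs ltnn subnn /= addn0.
rewrite /name_entry hp /=.
have hn : nth X (LP :: El ++ Er ++ [:: RP]) (size E') = last LP E'.
  by rewrite eEl -catA nth_last_cons.
rewrite hn (negbTE hlast).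
have hd : drop (size E').+1 (El ++ Er ++ [::RP]) = nseq k RP ++ Er ++ [::RP].
  rewrite eEl -catA (_ : E' ++ X :: nseq k RP ++ Er ++ [:: RP] = (E' ++ [::X]) ++ nseq k RP ++ Er ++ [:: RP]); last by rewrite -catA.
  by rewrite (_ : (size E').+1 = size (E' ++ [::X]) + 0) ?drop_shift ?drop0 // size_cat addn0 addn1.
have hf : find (fun a => ~~ is_RP a) (Er ++ [::RP]) = 0.
  by case: Er hEr0 hEr {wfsEl hd hp hn} => //= c Er' ->.
rewrite hd find_cat has_nseq /= andbF hf size_nseq addn0.
have hsEl : size El = (size E' + k).+1 by rewrite eEl size_cat /= size_nseq addnS.
set q := (size E').+1 + k.
have hq : q = size El by rewrite hsEl /q; lia.
have eEp : El = (E' ++ X :: nseq k.-1 RP) ++ [:: RP].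
  by rewrite eEl -catA /= nseq_rcons; case: (k) k0.
set Ep := E' ++ X :: nseq k.-1 RP.
have hsEp : size El = (size Ep).+1 by rewrite eEp size_cat addn1.
have cLq : cntL (LP :: El ++ Er ++ [::RP]) q = (count is_LP Ep).+1.
  by rewrite /cntL hq hsEp /= eEp -catA take_cat ltnn subnn take0 cats0.
have cRq : cntR (LP :: El ++ Er ++ [::RP]) q = count is_RP Ep.
  by rewrite /cntR hq hsEp /= eEp -catA take_cat ltnn subnn take0 cats0.
have balEp : count is_LP Ep = (count is_RP Ep).+1.
  move: balEl; rewrite eEp !count_cat /=; lia.
have hL : forall y', y' <= size El -> cntL (LP :: El ++ Er ++ [::RP]) y'.+1 = (count is_LP (take y' El)).+1.
  move=> y' hy'; rewrite /cntL /= count_take_cat (_ : y' - size El = 0) ?take0 ?addn0 //; lia.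
have hR : forall y', y' <= size El -> cntR (LP :: El ++ Er ++ [::RP]) y'.+1 = count is_RP (take y' El).
  move=> y' hy'; rewrite /cntR /= count_take_cat (_ : y' - size El = 0) ?take0 ?addn0 //; lia.
have C0 : C (LP :: El ++ Er ++ [::RP]) q 0 = false.
  rewrite /C cLq cRq /cntL /cntR take0 /=; apply/negbTE; apply/eqP; lia.
have C1 : C (LP :: El ++ Er ++ [::RP]) q 1 = true.
  rewrite /C cLq cRq (hL 0) // (hR 0) // take0 /=.
  rewrite nth_catL ?hE0 /=; last by rewrite hsEl.
  apply/eqP; lia.
have Crest : filter (C (LP :: El ++ Er ++ [::RP]) q) (iota 2 (q - 2)) = [::].
  apply/eqP; apply/negbNE; rewrite -has_filter; apply/hasPn => y; rewrite mem_iota => /andP [y2 yq].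
  have ey : y = (y.-1).+1 by lia.
  rewrite /C cLq cRq ey hL ?hR; try lia.
  have h := wfsEl y.-1 ltac:(apply/andP; split; lia).
  apply/negP => /andP [_ /eqP]; lia.
have -> : match_left (LP :: El ++ Er ++ [::RP]) q = 1.
  have e : iota 0 q = iota 0 2 ++ iota 2 (q - 2).
    by rewrite -iotaD; congr iota; rewrite /q; lia.
  by rewrite mlE e filter_cat Crest cats0 /= C0 C1.
by rewrite /= take0.
Qed.


Lemma mid l r : name_entry (expr (Node l r)) (internal l).+1 = 1.
Proof.
case: l => [|a b].
  have ex : nth 0 (xs (expr (Node Leaf r))) 0 = 1 by rewrite [expr _]/= !xs_cons.
  by rewrite /name_entry xposE (_ : (internal Leaf).+1.-1 = 0) // ex.
have [E' [k [e c _ h1]]] := lastX (Node a b).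
case: (h1 isT) => hl k0.
rewrite -c.
apply: (Bgen e k0 hl) => //.
- by case: r.
- by case: r.
- by move=> y hy; apply: wfs.
- exact: bal.
Qed.

Lemma name_node l r : name (Node l r) = name l ++ 1 :: map (addn (internal l).+1) (name r).
Proof.
rewrite /name [internal (Node l r)]/= -addnS iotaD map_cat; congr (_ ++ _).
  apply/eq_in_map => i; rewrite mem_iota => hi.
  have h := @G [::LP] (expr r ++ [::RP]) l i ltac:(apply/andP; split; lia).
  exact: h.
rewrite [iota _ _.+1]/= [map _ (_ :: _)]/=.
rewrite add1n mid; congr (_ :: _).
rewrite (_ : (internal l).+2 = (internal l).+1 + 1) ?iotaDl -?map_comp; last by rewrite addn1.
apply/eq_in_map => j; rewrite mem_iota => hj /=.
have h := @G (LP :: expr l) [::RP] r j ltac:(apply/andP; split; lia).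
rewrite [count is_X (LP :: expr l)]/= count_X_expr in h.
exact: h.
Qed.


Fixpoint graft (t s : tree) : tree :=
  match t with Leaf => s | Node l r => Node l (graft r s) end.

Lemma internal_graft t s : internal (graft t s) = internal t + internal s.
Proof. elim: t => //= l _ r ->; lia. Qed.

Lemma size_name t : size (name t) = internal t.
Proof. by rewrite size_map size_iota. Qed.

Lemma name_graft t s : name (graft t s) = name t ++ map (addn (internal t)) (name s).
Proof.
elim: t => [|l _ r IH].
  by rewrite /= map_id_in // => x _; rewrite add0n.
rewrite [graft (Node l r) s]/= !name_node IH map_cat -map_comp [internal (Node l r)]/= -catA cat_cons.
congr (_ ++ _ :: _ ++ _); apply: eq_map => x /=; lia.
Qed.

Lemma all2_refl (s : seq nat) : all2 leq s s.
Proof. by elim: s => //= a s ->; rewrite leqnn. Qed.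

Lemma all2_catE (x x' y y' : seq nat) : size x = size x' ->
  all2 leq (x ++ y) (x' ++ y') = all2 leq x x' && all2 leq y y'.
Proof.
elim: x x' => [|a x IH] [|a' x'] //= [] e.
by rewrite IH // andbA.
Qed.

Lemma all2_map (f g : nat -> nat) s : (forall a, f a <= g a) -> all2 leq (map f s) (map g s).
Proof. by move=> h; elim: s => //= a s ->; rewrite h. Qed.

Lemma all2_antisym (a b : seq nat) : all2 leq a b -> all2 leq b a -> a = b.
Proof.
elim: a b => [|x a IH] [|y b] //= /andP [h1 h2] /andP [h3 h4].
by rewrite (IH b h2 h4); congr (_ :: _); apply/eqP; rewrite eqn_leq h1 h3.
Qed.

Lemma all2_shift n (v w : seq nat) :
  all2 leq [seq a + n | a <- v] [seq a + n | a <- w] -> all2 leq v w.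
Proof.
elim: v w => [|a v IH] [|b w] //= /andP [h1 h2].
by rewrite leq_add2r in h1; rewrite h1 IH.
Qed.

Lemma K tu tv : dotplus (name tu) (name tv) (nwarrow (name tu) (name tv)).
Proof.
split; last split.
- exists (graft tu tv); split; first by rewrite internal_graft !size_name.
  rewrite name_graft /nwarrow size_name; congr (_ ++ _); apply: eq_map => a; lia.
- rewrite /cwle /nearrow /nwarrow all2_catE // all2_refl /=.
  by apply: all2_map => a; rewrite /tri; case: eqP => [->|_]; lia.
- exact: all2_refl.
Qed.

Unset Implicit Arguments.

Theorem mainTheorem14 (n m k : nat) (u v w : seq nat) :
  1 <= n -> 1 <= m -> 1 <= k ->
  hatN n u -> hatN m v -> hatN k w ->
  ((forall t, dotplus u v t <-> dotplus u w t) <-> v = w) /\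
  ((forall t, dotplus v u t <-> dotplus w u t) <-> v = w).
Proof.
move=> _ _ _ [tu [_ <-]] [tv [_ <-]] [tw [_ <-]].
split; split; try by move=> ->.
- move=> H.
  have [_ [_ h1]] := (H _).1 (K tu tv).
  have [_ [_ h2]] := (H _).2 (K tu tw).
  move: h1 h2; rewrite /cwle /nwarrow !all2_catE // => /andP [_ h1] /andP [_ h2].
  exact: all2_antisym (all2_shift h1) (all2_shift h2).
- move=> H.
  have [[t1 [e1 n1]] [_ h1]] := (H _).1 (K tv tu).
  have [[t2 [e2 n2]] [_ h2]] := (H _).2 (K tw tu).
  have s1 : size (name tv) = size (name tw).
    by move: (size_name t1); rewrite n1 e1 /nwarrow size_cat size_map; lia.
  move: h1 h2; rewrite /cwle /nwarrow !all2_catE // => /andP [h1 _] /andP [h2 _].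
  exact: all2_antisym h1 h2.
Qed.
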